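(* For all integers $n,m\ge 3$, $\gamma_p(C_n\times C_m)\le 4\left\lceil\frac{n}{4}\right\rceil\left\lceil\frac{m}{4}\right\rceil$.
   Context: All graphs are finite, simple and undirected. $C_n$ denotes the cycle of order $n$ and $G\times H$ the Cartesian product of graphs. For a graph $G$ without isolated vertices, a set $D\subseteq V(G)$ is a paired dominating set if every vertex outside $D$ has a neighbour in $D$ and the induced subgraph $G[D]$ has a perfect matching; $\gamma_p(G)$ is the minimum size of a paired dominating set. *)

(* Defs.v *)
From mathcomp Require Import all_boot.
Set Implicit Arguments. Unset Strict Implicit. Unset Printing Implicit Defensive.

(* The cycle C_n on vertex set 'I_n : i ~ j iff j = i+1 mod n or i = j+1 mod n.
   (For n >= 3 this is a simple cycle of order n.) *)
Definition cycle_adj (n : nat) : rel 'I_n :=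
  fun i j => ((i.+1 %% n) == j) || ((j.+1 %% n) == i).

Definition cart_adj (T1 T2 : finType) (e1 : rel T1) (e2 : rel T2) : rel (T1 * T2) :=
  fun u v => ((u.1 == v.1) && e2 u.2 v.2) || ((u.2 == v.2) && e1 u.1 v.1).

Section Paired.
Variables (T : finType) (adj : rel T).

Definition dominating (D : {set T}) : bool :=
  [forall v, (v \notin D) ==> [exists u in D, adj u v]].

Definition perfect_matching_of (D : {set T}) (M : {set {set T}}) : bool :=
  [forall e in M, exists x, exists y,
       [&& x \in D, y \in D, x != y, adj x y & e == [set x; y]]] &&
  [forall x in D, #|[set e in M | x \in e]| == 1].

Definition paired_dominating (D : {set T}) : bool :=
  dominating D && [exists M, perfect_matching_of D M].

(* gamma_p(G): the minimum size of a paired dominating set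
   (#|T|.+1 if none exists, which never happens for graphs without
   isolated vertices). *)
Definition gamma_p : nat :=
  \big[minn/#|T|.+1]_(D : {set T} | paired_dominating D) #|D|.
End Paired.

Definition ceil4 (n : nat) : nat := (n + 3) %/ 4.

(* Main.v *)
Require Import Defs.
From mathcomp Require Import all_boot order zify_ssreflect.
Import SsreflectZifyInstances.Exports.

Definition nadj n a b := [|| a.+1 == b, b.+1 == a, (a.+1 == n) && (b == 0) | (b.+1 == n) && (a == 0)].
Definition inS0 n i := (i %% 4 < 2) || ((n %% 4 == 1) && (i == n - 2)).
Definition q0 n i := if (n %% 4 == 1) && (i == n - 1) then n - 2 else if (n %% 4 == 1) && (i == n - 2) then n - 1 else if i %% 4 == 0 then i + 1 else i - 1.
Definition inS2 n i := (2 <= i %% 4) || ((n %% 4 != 0) && ((i == n - 1) || (i == 0))).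
Definition q2 n i := if (n %% 4 != 0) && (i == n - 1) then 0 else if (n %% 4 != 0) && (i == 0) then n - 1 else if i %% 4 == 2 then i + 1 else i - 1.
Definition colA (j : nat) := j %% 4 == 0.
Definition colB m j := (j %% 4 == 2) || ((j %% 4 == 1) && (j.+1 == m)).
Definition f0 n k := minn (4 * (k %/ 2)) (n - 2) + k %% 2.
Definition f2 n k := let b := minn (4 * (k %/ 2) + 2) (n - 1) in
  if k %% 2 == 0 then b else (if b.+1 == n then 0 else b.+1).
Definition g m l := minn (4 * l + 2) (m - 1).

Lemma nadj_cyc n (a b : 'I_n) : nadj n a b -> cycle_adj a b.
Proof.
have H (x : nat) : x < n -> x.+1 %% n = if x.+1 == n then 0 else x.+1.
  move=> hx; case: ifP => [/eqP ->|h]; first by rewrite modnn.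
  by rewrite modn_small //; lia.
rewrite /cycle_adj /nadj !H //; have := ltn_ord a; have := ltn_ord b.
by repeat case: ifP; lia.
Qed.

Lemma Q0_lt n i : 3 <= n -> i < n -> inS0 n i -> q0 n i < n.
Proof. rewrite /inS0 /q0 /nadj => *. repeat case: ifP => ?; lia. Qed.
Lemma Q0_in n i : 3 <= n -> i < n -> inS0 n i -> inS0 n (q0 n i).
Proof. rewrite /inS0 /q0 /nadj => *. repeat case: ifP => ?; lia. Qed.
Lemma Q0_ne n i : 3 <= n -> i < n -> inS0 n i -> q0 n i != i.
Proof. rewrite /inS0 /q0 /nadj => *. repeat case: ifP => ?; lia. Qed.
Lemma Q0_adj n i : 3 <= n -> i < n -> inS0 n i -> nadj n i (q0 n i).
Proof. rewrite /inS0 /q0 /nadj => *. repeat case: ifP => ?; lia. Qed.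
Lemma Q0_inv n i : 3 <= n -> i < n -> inS0 n i -> q0 n (q0 n i) = i.
Proof.
rewrite /inS0 => h1 h2 h3; rewrite {2}/q0.
case: (boolP ((n %% 4 == 1) && (i == n - 1))) => H1; rewrite ?H1 ?(negbTE H1) /=.
  rewrite /q0; repeat case: ifP => ?; lia.
case: (boolP ((n %% 4 == 1) && (i == n - 2))) => H2; rewrite ?H2 ?(negbTE H2) /=.
  rewrite /q0; repeat case: ifP => ?; lia.
case: (boolP (i %% 4 == 0)) => H3; rewrite ?H3 ?(negbTE H3) /=;
  rewrite /q0; repeat case: ifP => ?; lia.
Qed.
Lemma Q0 n i : 3 <= n -> i < n -> inS0 n i ->
  [/\ q0 n i < n, inS0 n (q0 n i), q0 n (q0 n i) = i, q0 n i != i & nadj n i (q0 n i)].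
Proof. move=> *; split; [exact: Q0_lt|exact: Q0_in|exact: Q0_inv|exact: Q0_ne|exact: Q0_adj]. Qed.
Lemma Q2_lt n i : 3 <= n -> i < n -> inS2 n i -> q2 n i < n.
Proof. rewrite /inS2 /q2 /nadj => *. repeat case: ifP => ?; lia. Qed.
Lemma Q2_in n i : 3 <= n -> i < n -> inS2 n i -> inS2 n (q2 n i).
Proof. rewrite /inS2 /q2 /nadj => *. repeat case: ifP => ?; lia. Qed.
Lemma Q2_ne n i : 3 <= n -> i < n -> inS2 n i -> q2 n i != i.
Proof. rewrite /inS2 /q2 /nadj => *. repeat case: ifP => ?; lia. Qed.
Lemma Q2_adj n i : 3 <= n -> i < n -> inS2 n i -> nadj n i (q2 n i).
Proof. rewrite /inS2 /q2 /nadj => *. repeat case: ifP => ?; lia. Qed.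
Lemma Q2_inv n i : 3 <= n -> i < n -> inS2 n i -> q2 n (q2 n i) = i.
Proof.
rewrite /inS2 => h1 h2 h3; rewrite {2}/q2.
case: (boolP ((n %% 4 != 0) && (i == n - 1))) => H1; rewrite ?H1 ?(negbTE H1) /=.
  rewrite /q2; repeat case: ifP => ?; lia.
case: (boolP ((n %% 4 != 0) && (i == 0))) => H2; rewrite ?H2 ?(negbTE H2) /=.
  rewrite /q2; repeat case: ifP => ?; lia.
case: (boolP (i %% 4 == 2)) => H3; rewrite ?H3 ?(negbTE H3) /=;
  rewrite /q2; repeat case: ifP => ?; lia.
Qed.
Lemma Q2 n i : 3 <= n -> i < n -> inS2 n i ->
  [/\ q2 n i < n, inS2 n (q2 n i), q2 n (q2 n i) = i, q2 n i != i & nadj n i (q2 n i)].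
Proof. move=> *; split; [exact: Q2_lt|exact: Q2_in|exact: Q2_inv|exact: Q2_ne|exact: Q2_adj]. Qed.

Lemma R0 n i : 3 <= n -> i < n -> ~~ inS0 n i -> exists2 i', i' < n & inS0 n i' && nadj n i' i.
Proof.
rewrite /inS0 /nadj => h1 h2 h3.
case: (boolP (i %% 4 == 2)) => h4; first by exists (i - 1); lia.
case: (boolP (i.+1 < n)) => h5; first by exists i.+1; lia.
by exists 0; lia.
Qed.

Lemma R2 n i : 3 <= n -> i < n -> ~~ inS2 n i -> exists2 i', i' < n & inS2 n i' && nadj n i' i.
Proof.
rewrite /inS2 /nadj => h1 h2 h3.
case: (boolP (i %% 4 == 1)) => h4; first by exists i.+1; lia.
case: (boolP (i == 0)) => h5; first by exists (n - 1); lia.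
by exists (i - 1); lia.
Qed.

Lemma U n i : inS0 n i || inS2 n i.
Proof. rewrite /inS0 /inS2; lia. Qed.

Lemma AB m j : colA j -> colB m j = false.
Proof. rewrite /colA /colB; lia. Qed.

Lemma C m j : 3 <= m -> j < m -> ~~ colA j -> ~~ colB m j ->
  exists ja jb, [/\ ja < m, colA ja & nadj m ja j] /\ [/\ jb < m, colB m jb & nadj m jb j].
Proof.
rewrite /colA /colB /nadj => h1 h2 h3 h4.
case: (boolP (j %% 4 == 1)) => h5; first by exists (j - 1), j.+1; split; split; lia.
case: (boolP (j.+1 < m)) => h6; first by exists j.+1, (j - 1); split; split; lia.
by exists 0, (j - 1); split; split; lia.
Qed.

Lemma K0 n i : 3 <= n -> i < n -> inS0 n i -> exists2 k, k < 2 * ceil4 n & f0 n k = i.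
Proof.
rewrite /inS0 /f0 /ceil4 => h1 h2 h3.
case: (boolP ((n %% 4 == 1) && (i == n - 2))) => h4.
  by exists (2 * ((n - 1) %/ 4)); lia.
case: (boolP (4 * (i %/ 4) <= n - 2)) => h5.
  by exists (2 * (i %/ 4) + i %% 4); lia.
by exists (2 * (i %/ 4) + 1); lia.
Qed.

Lemma K2 n i : 3 <= n -> i < n -> inS2 n i -> exists2 k, k < 2 * ceil4 n & f2 n k = i.
Proof.
rewrite /inS2 /f2 /ceil4 => h1 h2 h3.
case: (boolP ((n %% 4 != 0) && (i == n - 1))) => h4.
  by exists (2 * ((n - 1) %/ 4)); repeat case: ifP; lia.
case: (boolP ((n %% 4 != 0) && (i == 0))) => h5.
  by exists (2 * ((n - 1) %/ 4) + 1); repeat case: ifP; lia.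
by exists (2 * (i %/ 4) + (i %% 4 - 2)); repeat case: ifP; lia.
Qed.

Lemma KA m j : j < m -> colA j -> exists2 l, l < ceil4 m & 4 * l = j.
Proof. rewrite /colA /ceil4 => h1 h2; exists (j %/ 4); lia. Qed.

Lemma KB m j : 3 <= m -> j < m -> colB m j -> exists2 l, l < ceil4 m & g m l = j.
Proof. rewrite /colB /ceil4 /g => h0 h1 h2; exists (j %/ 4); lia. Qed.

Section Main.
Variables n' m' : nat.
Local Notation n := n'.+1.
Local Notation m := m'.+1.
Local Notation T := ('I_n * 'I_m)%type.
Local Notation adj := (cart_adj (@cycle_adj n) (@cycle_adj m)).
Hypothesis hn : 3 <= n.
Hypothesis hm : 3 <= m.

Definition Dset : {set T} :=
  [set x : T | (colA x.2 && inS0 n x.1) || (colB m x.2 && inS2 n x.1)].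
Definition pt (x : T) : T :=
  (inord (if colA x.2 then q0 n x.1 else q2 n x.1), x.2).

Lemma pt_props x : x \in Dset ->
  [/\ pt x \in Dset, pt (pt x) = x, pt x != x & adj x (pt x)].
Proof.
case: x => i j; rewrite inE /= => hx; have hi := ltn_ord i.
case: (boolP (colA j)) => cA.
  move: hx; rewrite cA AB //= orbF => h.
  have [q1 q2' q3 q4 q5] := Q0 _ _ hn hi h.
  rewrite /pt /= cA !inordK //; split.
  - by rewrite inE /= cA inordK // q2'.
  - by rewrite q3 inord_val.
  - apply/eqP => -[] E.
    have := congr1 val E; rewrite /= inordK // => E1; by move: q4; rewrite E1 eqxx.
  - rewrite /cart_adj /= eqxx /=; apply/orP; right; apply: nadj_cyc; by rewrite inordK.
move: hx; rewrite (negbTE cA) /= => /andP [cB h].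
have [q1 q2' q3 q4 q5] := Q2 _ _ hn hi h.
rewrite /pt /= (negbTE cA) !inordK //; split.
- by rewrite inE /= (negbTE cA) cB inordK // q2'.
- by rewrite q3 inord_val.
- apply/eqP => -[] E.
  have := congr1 val E; rewrite /= inordK // => E1; by move: q4; rewrite E1 eqxx.
- rewrite /cart_adj /= eqxx /=; apply/orP; right; apply: nadj_cyc; by rewrite inordK.
Qed.

Lemma D_pd : paired_dominating adj Dset.
Proof.
apply/andP; split.
  apply/forallP => -[i j]; apply/implyP; rewrite inE /= negb_or => /andP [h1 h2].
  have hi := ltn_ord i; have hj := ltn_ord j.
  case: (boolP (colA j)) => cA.
    move: h1; rewrite cA /= => h1.
    have [i' hi' /andP [s a]] := R0 _ _ hn hi h1.
    apply/existsP; exists (inord i', j); rewrite inE /= inordK // cA s /=.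
    rewrite /cart_adj /= eqxx /=; apply/orP; right; apply: nadj_cyc; by rewrite inordK.
  case: (boolP (colB m j)) => cB.
    move: h2; rewrite cB /= => h2.
    have [i' hi' /andP [s a]] := R2 _ _ hn hi h2.
    apply/existsP; exists (inord i', j); rewrite inE /= inordK // (negbTE cA) cB s /=.
    rewrite /cart_adj /= eqxx /=; apply/orP; right; apply: nadj_cyc; by rewrite inordK.
  have [ja [jb [[ha ca aa] [hb cb ab]]]] := C _ _ hm hj cA cB.
  case/orP: (U n i) => s.
    apply/existsP; exists (i, inord ja); rewrite inE /= inordK // ca s /=.
    rewrite /cart_adj /= eqxx /=; apply/orP; left; apply: nadj_cyc; by rewrite inordK.
  apply/existsP; exists (i, inord jb); rewrite inE /= inordK // cb s orbT /=.
    rewrite /cart_adj /= eqxx /=; apply/orP; left; apply: nadj_cyc; by rewrite inordK.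
apply/existsP; exists [set [set x; pt x] | x in Dset]; apply/andP; split.
  apply/forallP => e; apply/implyP => /imsetP [x hx ->].
  have [p1 p2 p3 p4] := pt_props _ hx.
  apply/existsP; exists x; apply/existsP; exists (pt x).
  by rewrite hx p1 eq_sym p3 p4 eqxx.
apply/forallP => x; apply/implyP => hx.
suff -> : [set e in [set [set y; pt y] | y in Dset] | x \in e] = [set [set x; pt x]].
  by rewrite cards1.
have [p1 p2 p3 p4] := pt_props _ hx.
apply/setP => e; rewrite !inE; apply/andP/eqP.
  case=> /imsetP [y hy ->]; rewrite !inE => /orP [/eqP ->|/eqP ->] //.
  have [_ q2 _ _] := pt_props _ hy.
  by rewrite q2 setUC.
move=> ->; split; first by apply/imsetP; exists x.
by rewrite !inE eqxx.
Qed.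

Definition F0 (kl : 'I_(2 * ceil4 n) * 'I_(ceil4 m)) : T :=
  (inord (f0 n kl.1), inord (4 * kl.2)).
Definition F2 (kl : 'I_(2 * ceil4 n) * 'I_(ceil4 m)) : T :=
  (inord (f2 n kl.1), inord (g m kl.2)).

Lemma D_card : #|Dset| <= 4 * ceil4 n * ceil4 m.
Proof.
have sub : Dset \subset (F0 @: setT) :|: (F2 @: setT).
  apply/subsetP => -[i j]; rewrite inE /= => /orP [/andP [cA s]|/andP [cB s]].
    have [k hk ek] := K0 _ _ hn (ltn_ord i) s.
    have [l hl el] := KA _ _ (ltn_ord j) cA.
    apply/setUP; left; apply/imsetP; exists (Ordinal hk, Ordinal hl) => //.
    by rewrite /F0 /= ek el !inord_val.
  have [k hk ek] := K2 _ _ hn (ltn_ord i) s.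
  have [l hl el] := KB _ _ hm (ltn_ord j) cB.
  apply/setUP; right; apply/imsetP; exists (Ordinal hk, Ordinal hl) => //.
  by rewrite /F2 /= ek el !inord_val.
apply: leq_trans (subset_leq_card sub) _.
apply: leq_trans (leq_card_setU _ _).1 _.
have c1 := leq_imset_card F0 setT; have c2 := leq_imset_card F2 setT.
rewrite cardsT card_prod !card_ord in c1 c2.
have -> : 4 * ceil4 n * ceil4 m = 2 * ceil4 n * ceil4 m + 2 * ceil4 n * ceil4 m.
  by rewrite -mulnDl -mulnDl.
exact: leq_add.
Qed.
End Main.

Lemma bm (T : finType) (P : pred T) (F : T -> nat) x j : P j -> \big[minn/x]_(i | P i) F i <= F j.
Proof. move=> Pj. have := @Order.TotalTheory.bigmin_le_cond _ nat T x j P F Pj. by []. Qed.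

Theorem theorem5p1 (n m : nat) (hn : 3 <= n) (hm : 3 <= m) :
  gamma_p (cart_adj (@cycle_adj n) (@cycle_adj m)) <= 4 * ceil4 n * ceil4 m.
Proof.
case: n hn => [//|n'] hn; case: m hm => [//|m'] hm.
apply: leq_trans (D_card _ _ hn hm).
rewrite /gamma_p; apply: (bm _ _ _ _ (Dset n' m')); exact: D_pd.
Qed.
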